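(* Let $X$ be a one- or two-sided subshift with $\mathcal L(X)=\mathcal L(\tilde X)$ and let $p_X(n)$ be the number of blocks of length $n$ in $\mathcal L(X)$. Then for every $n\ge1$ the number of distinct paths of length $n$ in the HB diagram of $X$ that begin at a vertex which is a block of length one equals $p_X(n)$.
   Context: Let $\mathcal A$ be a finite alphabet and $\sigma$ the shift, $(\sigma x)_i=x_{i+1}$. A one-sided subshift is a nonempty closed $\sigma$-invariant $X^+\subseteq\mathcal A^{\mathbb N}$; its natural extension is $\tilde X=\{x\in\mathcal A^{\mathbb Z}: x_px_{p+1}\dots\in X^+ \text{ for all } p\in\mathbb Z\}$. For a two-sided subshift $X\subseteq\mathcal A^{\mathbb Z}$, $X^+$ is the set of right rays of points of $X$, so $\tilde X=X$. $\mathcal L(Y)$ denotes the set of finite blocks occurring in points of $Y$. For $a_{-n}\dots a_0\in\mathcal L(\tilde X)$, $\mathrm{fol}(a_{-n}\dots a_0)=\{b_0b_1\dots\in X^+:\exists b\in\tilde X \text{ with } b_{-n}\dots b_0=a_{-n}\dots a_0\}$. A block $a_{-n}\dots a_0\in\mathcal L(\tilde X)$ with $n\ge1$ is significant if $\mathrm{fol}(a_{-n}\dots a_0)\subsetneq\mathrm{fol}(a_{-n+1}\dots a_0)$; single symbols in $\mathcal L(\tilde X)$ are also counted as significant. $\mathrm{sig}(a_{-n}\dots a_0)$ is the longest significant suffix. The HB diagram has vertex set the significant blocks of $\tilde X$ and an arrow $\alpha\to\beta$ iff there is a symbol $b$ with $\alpha b\in\mathcal L(\tilde X)$ and $\beta=\mathrm{sig}(\alpha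 b)$. The length of a path is its number of vertices. *)

(* Defs.v *)
From mathcomp Require Import all_boot.
From mathcomp Require Import boolp.
From Stdlib Require Import ZArith.

Set Implicit Arguments.
Unset Strict Implicit.
Unset Printing Implicit Defensive.

Section HB.
Variable A : finType.

Definition shift1 (x : nat -> A) : nat -> A := fun i => x i.+1.
Definition shift2 (x : Z -> A) : Z -> A := fun i => x (i + 1)%Z.

(* one-sided subshift: nonempty, closed (product topology), sigma(X) ⊆ X *)
Definition one_sided_subshift (Xp : (nat -> A) -> Prop) : Prop :=
  (exists x, Xp x) /\
  (forall x, (forall m : nat, exists y, Xp y /\ forall i, i < m -> y i = x i) -> Xp x) /\
  (forall x, Xp x -> Xp (shift1 x)).

Definition two_sided_subshift (X : (Z -> A) -> Prop) : Prop :=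
  (exists x, X x) /\
  (forall x, (forall m : nat, exists y, X y /\
       forall i : Z, (Z.abs i <= Z.of_nat m)%Z -> y i = x i) -> X x) /\
  (forall x, X x <-> X (shift2 x)).

Definition natext (Xp : (nat -> A) -> Prop) (x : Z -> A) : Prop :=
  forall p : Z, Xp (fun i => x (p + Z.of_nat i)%Z).

Definition rays (X : (Z -> A) -> Prop) (b : nat -> A) : Prop :=
  exists x, X x /\ forall i : nat, b i = x (Z.of_nat i).

Definition lang1 (Xp : (nat -> A) -> Prop) (w : seq A) : Prop :=
  exists x (p : nat), Xp x /\ w = mkseq (fun i => x (p + i)) (size w).

Definition lang2 (Y : (Z -> A) -> Prop) (w : seq A) : Prop :=
  exists x (p : Z), Y x /\ w = mkseq (fun i => x (p + Z.of_nat i)%Z) (size w).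

Definition complexity (L : seq A -> Prop) (n : nat) : nat :=
  #|[set w : n.-tuple A | `[< L (val w) >] ]|.

(* HB diagram; Xp plays the role of X^+, Y the role of \tilde X.
   A block a_{-n} ... a_0 is the list [:: a_{-n}; ...; a_0]. *)
Section Diagram.
Variables (Xp : (nat -> A) -> Prop) (Y : (Z -> A) -> Prop).

Definition fol (w : seq A) (b : nat -> A) : Prop :=
  Xp b /\ exists x, Y x /\
    mkseq (fun i => x (Z.of_nat i - Z.of_nat (size w).-1)%Z) (size w) = w /\
    forall i : nat, b i = x (Z.of_nat i).

Definition significant (w : seq A) : Prop :=
  lang2 Y w /\
  (size w = 1 \/
   (2 <= size w /\ (forall b, fol w b -> fol (behead w) b) /\
    exists b, fol (behead w) b /\ ~ fol w b)).

Definition is_sig (w v : seq A) : Prop :=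
  (exists u, w = u ++ v) /\ significant v /\
  forall u' v', w = u' ++ v' -> significant v' -> size v' <= size v.

Definition arrow (alpha beta : seq A) : Prop :=
  exists b : A, lang2 Y (rcons alpha b) /\ is_sig (rcons alpha b) beta.

(* a path of length n (= n vertices) starting at a block of length one *)
Definition HBpath (n : nat) (p : seq (seq A)) : Prop :=
  size p = n /\
  (forall v, v \in p -> significant v) /\
  size (head [::] p) = 1 /\
  forall i, i.+1 < n -> arrow (nth [::] p i) (nth [::] p i.+1).

Definition HBpath_count (n m : nat) : Prop :=
  exists s : seq (seq (seq A)),
    uniq s /\ (forall p, p \in s <-> HBpath n p) /\ size s = m.

End Diagram.
End HB.

(* Main.v *)
Require Import Defs.
From mathcomp Require Import all_boot.
From mathcomp Require Import boolp.
From Stdlib Require Import ZArith Lia Classical_Prop.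
From mathcomp Require Import zify.

Set Implicit Arguments. Unset Strict Implicit. Unset Printing Implicit Defensive.

Section Gen.
Variable A : finType.
Variables (Xp : (nat -> A) -> Prop) (Y : (Z -> A) -> Prop).
Hypothesis Hsh : forall x, Y x <-> Y (shift2 x).
Hypothesis Hray : forall x, Y x -> Xp (fun i => x (Z.of_nat i)).

Lemma Yshift k : forall x, Y x -> Y (fun i => x (i + k)%Z).
Proof.
induction k using Z.peano_ind.
- move=> x Yx. have -> : (fun i => x (i + 0)%Z) = x.
    by apply: funext => i; rewrite Z.add_0_r.
  by [].
- move=> x Yx. have -> : (fun i => x (i + Z.succ k)%Z) = shift2 (fun i => x (i + k)%Z).
    by apply: funext => i; rewrite /shift2; f_equal; lia.
  by apply: (proj1 (Hsh _)); apply: IHk.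
- move=> x Yx. apply: (proj2 (Hsh _)).
  have -> : shift2 (fun i => x (i + Z.pred k)%Z) = (fun i => x (i + k)%Z).
    by apply: funext => i; rewrite /shift2; f_equal; lia.
  by apply: IHk.
Qed.

Definition E (x : Z -> A) (w : seq A) :=
  mkseq (fun i => x (Z.of_nat i - Z.of_nat (size w).-1)%Z) (size w) = w.

Lemma E_rcons x v b : E x (rcons v b) <-> x 0%Z = b /\ E (fun i => x (i - 1)%Z) v.
Proof.
rewrite /E size_rcons /= mkseqS.
have -> : (Z.of_nat (size v) - Z.of_nat (size v))%Z = 0%Z by lia.
have -> : mkseq (fun i => x (Z.of_nat i - Z.of_nat (size v))%Z) (size v) =
          mkseq (fun i => x (Z.of_nat i - Z.of_nat (size v).-1 - 1)%Z) (size v).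
  apply/eq_in_map => i; rewrite mem_iota /= add0n => Hi.
  f_equal; have : 0 < size v by case: (size v) Hi.
  case: (size v) Hi => // m _ _ /=. lia.
split.
- by move/rcons_inj => [-> ->].
- by case=> -> ->.
Qed.

Lemma E_nil x : E x [::].
Proof. by []. Qed.

Lemma E_cat x u v : E x (u ++ v) -> E x v.
Proof.
elim/last_ind: v x => [|v b IH] x; first by [].
rewrite -rcons_cat !E_rcons => -[-> H]; split => //; exact: IH.
Qed.

Lemma lang2E w : lang2 Y w <-> exists x, Y x /\ E x w.
Proof.
split.
- case=> x [p [Yx Hw]].
  exists (fun i => x (i + (p + Z.of_nat (size w).-1))%Z); split; first exact: Yshift.
  rewrite /E; transitivity (mkseq (fun i => x (p + Z.of_nat i)%Z) (size w)); last exact: esym Hw.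
  apply: eq_mkseq => i /=; f_equal; lia.
- case=> x [Yx Hw]; exists x, (- Z.of_nat (size w).-1)%Z; split => //.
  rewrite -[LHS]Hw; apply: eq_mkseq => i /=; f_equal; lia.
Qed.

Lemma lang2_cat u v : lang2 Y (u ++ v) -> lang2 Y v.
Proof. by move/lang2E => [x [Yx H]]; apply/lang2E; exists x; split => //; exact: E_cat H. Qed.

Lemma lang2_take k w : lang2 Y w -> lang2 Y (take k w).
Proof.
case=> x [p [Yx Hw]]; exists x, p; split => //.
rewrite {1}Hw /mkseq -map_take take_iota size_take.
congr (map _ (iota 0 _)); rewrite -[in RHS]Hw size_mkseq.
Qed.


Notation fol := (fol Xp Y).

Lemma folE w c : fol w c <-> exists x, Y x /\ E x w /\ c = (fun i => x (Z.of_nat i)).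
Proof.
split.
- case=> _ [x [Yx [Ew Hc]]]; exists x; split => //; split => //.
  by apply: funext => i.
- case=> x [Yx [Ew ->]]; split; first exact: Hray.
  by exists x; split => //; split.
Qed.

Lemma fol_cat u v c : fol (u ++ v) c -> fol v c.
Proof.
move/folE => [x [Yx [Ew Hc]]]; apply/folE; exists x; split => //; split => //.
exact: E_cat Ew.
Qed.

Lemma fol_rcons2 u a b c :
  fol (rcons (rcons u a) b) c <->
  c 0 = b /\ fol (rcons u a) (fun i => if i is j.+1 then c j else a).
Proof.
split.
- move/folE => [x [Yx [Ew Hc]]].
  move/E_rcons: Ew => [Hb Ew].
  split; first by rewrite Hc.
  apply/folE; exists (fun i => x (i - 1)%Z); split.
    have -> : (fun i => x (i - 1)%Z) = (fun i => x (i + (-1))%Z).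
      by apply: funext => i; f_equal; lia.
    exact: Yshift.
  split => //.
  move/E_rcons: (Ew) => [Ha _].
  apply: funext => -[|j]; first by rewrite -Ha.
  rewrite Hc; f_equal; lia.
- case=> Hb /folE [x1 [Yx1 [Ew Hd]]].
  apply/folE; exists (fun i => x1 (i + 1)%Z); split; first exact: Yshift.
  split.
    apply/E_rcons; split.
      have := f_equal (fun f => f 1) Hd; rewrite /= => <-; exact: Hb.
    have -> : (fun i => x1 (i - 1 + 1)%Z) = x1.
      by apply: funext => i; f_equal; lia.
    exact: Ew.
  apply: funext => i.
  have := f_equal (fun f => f i.+1) Hd; rewrite /= => ->; f_equal; lia.
Qed.

Definition Feq v w := forall c, fol v c <-> fol w c.

Lemma Feq_rcons u u' a b : Feq (rcons u a) (rcons u' a) ->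
  Feq (rcons (rcons u a) b) (rcons (rcons u' a) b).
Proof.
move=> H c; rewrite !fol_rcons2; split; case=> h1 h2; split => //; by apply/H.
Qed.

Lemma notsig w : lang2 Y w -> 2 <= size w -> ~ significant Xp Y w -> Feq w (behead w).
Proof.
case: w => [|a w] //= Hl H2 Hn c; split; first exact: (@fol_cat [:: a] w).
move=> Hc; apply: Classical_Prop.NNPP => Hnc; apply: Hn; split => //; right.
split => //; split; first by move=> b; exact: (@fol_cat [:: a] w).
by exists c.
Qed.


Notation sgn := (significant Xp Y).

Lemma sgn_ne v : sgn v -> v <> [::].
Proof. by case=> _ [|[]]; case: v. Qed.

Lemma lang2_pre u v : lang2 Y (u ++ v) -> lang2 Y u.
Proof. by move/(lang2_take (size u)); rewrite take_size_cat. Qed.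

Lemma lang2_drop k w : lang2 Y w -> lang2 Y (drop k w).
Proof. by rewrite -{1}(cat_take_drop k w); exact: lang2_cat. Qed.

Definition sigb v := `[< sgn v >].
Definition kf w := find (fun k => sigb (drop k w)) (iota 0 (size w)).
Definition sigf w := drop (kf w) w.

Lemma behead_dropS j (w : seq A) : behead (drop j w) = drop j.+1 w.
Proof. by elim: w j => [|a w IH] [|j] //=; rewrite drop0. Qed.

Lemma kf_spec w : lang2 Y w -> w <> [::] ->
  kf w < size w /\ sgn (sigf w) /\ forall k, k < kf w -> ~ sgn (drop k w).
Proof.
move=> Hl Hne.
have Hs : 0 < size w by case: (w) Hne.
have Hhas : has (fun k => sigb (drop k w)) (iota 0 (size w)).
  apply/hasP; exists (size w).-1; first by rewrite mem_iota add0n prednK // leqnn andbT.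
  apply/asboolT; split; first exact: lang2_drop.
  by left; rewrite size_drop; case: (size w) Hs => // m _; rewrite subSn // subnn.
have Hlt : kf w < size w by move: Hhas; rewrite has_find size_iota.
split => //; split.
  have := nth_find 0 Hhas; rewrite -/(kf w) nth_iota // add0n.
  by move/asboolP.
move=> k Hk; have := before_find 0 Hk; rewrite nth_iota ?add0n; last first.
  exact: ltn_trans Hk Hlt.
by move/asboolP.
Qed.

Lemma sigf_is_sig w : lang2 Y w -> w <> [::] -> is_sig Xp Y w (sigf w).
Proof.
move=> Hl Hne; have [Hlt [Hsg Hbef]] := kf_spec Hl Hne.
split; first by exists (take (kf w) w); rewrite cat_take_drop.
split => // u' v' Hw Hv'.
have Hd : v' = drop (size u') w by rewrite Hw drop_size_cat.
case: (ltnP (size u') (kf w)) => H.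
  by exfalso; apply: (Hbef _ H); rewrite -Hd.
by rewrite Hd !size_drop leq_sub2l.
Qed.

Lemma is_sig_uniq w v1 v2 : is_sig Xp Y w v1 -> is_sig Xp Y w v2 -> v1 = v2.
Proof.
move=> [[u1 H1] [S1 M1]] [[u2 H2] [S2 M2]].
have E1 := M1 _ _ H2 S2; have E2 := M2 _ _ H1 S1.
have Hs : size v1 = size v2 by apply/eqP; rewrite eqn_leq E1 E2.
have Hu : size u1 = size u2.
  by have := congr1 size H1; rewrite H2 !size_cat Hs => /eqP; rewrite eqn_add2r => /eqP.
by rewrite -(drop_size_cat v1 (erefl (size u1))) -H1 Hu H2 drop_size_cat.
Qed.

Lemma Feq_trans u v w : Feq u v -> Feq v w -> Feq u w.
Proof. by move=> H1 H2 c; rewrite H1 H2. Qed.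

Lemma Feq_sigf w : lang2 Y w -> w <> [::] -> Feq w (sigf w).
Proof.
move=> Hl Hne; have [Hlt [Hsg Hbef]] := kf_spec Hl Hne.
suff : forall j, j <= kf w -> Feq w (drop j w) by apply.
elim=> [|j IH] Hj; first by rewrite drop0.
apply: (Feq_trans (IH (ltnW Hj))); rewrite -behead_dropS.
apply: notsig; first exact: lang2_drop.
  by rewrite size_drop ltn_subRL addn1 (leq_ltn_trans Hj Hlt).
exact: Hbef.
Qed.


Lemma suffix_cmp (w u1 v1 u2 v2 : seq A) : w = u1 ++ v1 -> w = u2 ++ v2 ->
  size v1 <= size v2 -> exists u, v2 = u ++ v1.
Proof.
move=> H1 H2 Hs.
have Hu : size u2 <= size u1.
  have := congr1 size H1; rewrite H2 !size_cat => Hsz.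
  by rewrite -(leq_add2r (size v1)) -Hsz leq_add2l.
exists (take (size u1 - size u2) v2).
rewrite -{1}(cat_take_drop (size u1 - size u2) v2); congr (_ ++ _).
have -> : v2 = drop (size u2) w by rewrite H2 drop_size_cat.
by rewrite drop_drop subnK // H1 drop_size_cat.
Qed.

Lemma sigf_rcons w b : lang2 Y (rcons w b) -> w <> [::] ->
  sigf (rcons w b) = sigf (rcons (sigf w) b).
Proof.
move=> Hl Hne.
have Hlw : lang2 Y w by move: Hl; rewrite -cats1; exact: lang2_pre.
have Hne' : rcons w b <> [::] by case: (w).
have [Hlt [Hsg Hbef]] := kf_spec Hlw Hne.
have Hw : w = take (kf w) w ++ sigf w by rewrite cat_take_drop.
have Hwb : rcons w b = take (kf w) w ++ rcons (sigf w) b by rewrite {1}Hw rcons_cat.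
have Hlab : lang2 Y (rcons (sigf w) b) by rewrite Hwb in Hl; exact: lang2_cat Hl.
have Hsb := sigf_is_sig Hl Hne'.
case: (Hsb) => [[u' Hu'] [Sb Mb]].
have Hsize : size (sigf (rcons w b)) <= size (rcons (sigf w) b).
  rewrite leqNgt; apply/negP => Hgt.
  have Hsz : size u' + size (sigf (rcons w b)) = (size w).+1.
    by have := congr1 size Hu'; rewrite size_cat size_rcons.
  have Ha : size (sigf w) = size w - kf w by rewrite /sigf size_drop.
  move: Hgt; rewrite size_rcons => Hgt.
  have Hj : size u' < size w by lia.
  have Hjk : size u' < kf w by lia.
  have Hbeta : sigf (rcons w b) = rcons (drop (size u') w) b.
    by rewrite -drop_rcons ?(ltnW Hj) // [in RHS]Hu' drop_size_cat.
  set v := drop (size u') w in Hbeta.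
  have Hv2 : 2 <= size v.
    move: Hgt; rewrite Hbeta !size_rcons /v !size_drop; lia.
  have Hfeq := notsig (lang2_drop _ Hlw) Hv2 (Hbef _ Hjk).
  move: Hfeq Hv2 Hbeta; rewrite -/v.
  case/lastP: v => [|v1 a] //; case: v1 => [|c v1] // Hfeq _ Hbeta.
  rewrite /= -rcons_cons in Hfeq.
  have Hf2 := Feq_rcons b Hfeq.
  move: Sb; rewrite Hbeta => -[_ [|[_ [_ [d [Hd1 Hd2]]]]]].
    by rewrite !size_rcons.
  by apply: Hd2; apply/Hf2; move: Hd1; rewrite rcons_cons.
have [u Hu] := suffix_cmp Hu' Hwb Hsize.
apply: (is_sig_uniq (w := rcons (sigf w) b)); last first.
  apply: sigf_is_sig => //; by case: (sigf w).
split; first by exists u.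
split => // u2 v2 H2 S2; apply: (Mb (take (kf w) w ++ u2)) => //.
by rewrite Hwb H2 catA.
Qed.

Lemma lang2_ext u b : lang2 Y u -> u <> [::] -> lang2 Y (rcons (sigf u) b) ->
  lang2 Y (rcons u b).
Proof.
move=> Hl Hne /lang2E [x [Yx /E_rcons [Hb Ex1]]].
have Yx1 : Y (fun i => x (i - 1)%Z).
  have -> : (fun i => x (i - 1)%Z) = (fun i => x (i + (-1))%Z).
    by apply: funext => i; f_equal; lia.
  exact: Yshift.
have Hf : fol (sigf u) (fun i => x (Z.of_nat i - 1)%Z).
  by apply/folE; exists (fun i => x (i - 1)%Z).
move/(Feq_sigf Hl Hne): Hf => /folE [x2 [Yx2 [Ex2 Hr]]].
apply/lang2E; exists (fun i => x2 (i + 1)%Z); split; first exact: Yshift.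
apply/E_rcons; split.
  by have := f_equal (fun f => f 1) Hr; rewrite /= => <-; rewrite -Hb.
have -> : (fun i => x2 (i - 1 + 1)%Z) = x2 by apply: funext => i; f_equal; lia.
exact: Ex2.
Qed.


Definition pathf (w : seq A) := [seq sigf (take k w) | k <- iota 1 (size w)].

Lemma last_drop_lt (x0 : A) j v : j < size v -> last x0 (drop j v) = last x0 v.
Proof.
elim: v x0 j => [|a v IH] x0 [|j] //= Hj.
by rewrite IH //; case: v Hj IH.
Qed.

Lemma last_sigf x0 v : lang2 Y v -> v <> [::] -> last x0 (sigf v) = last x0 v.
Proof. by move=> Hl Hne; have [Hlt _] := kf_spec Hl Hne; exact: last_drop_lt. Qed.

Lemma nth_pathf w i : i < size w -> nth [::] (pathf w) i = sigf (take i.+1 w).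
Proof. by move=> Hi; rewrite (nth_map 0) ?size_iota // nth_iota. Qed.

Lemma take_ne k (w : seq A) : 0 < k -> k <= size w -> take k w <> [::].
Proof. by move=> Hk Hkw Ht; have := congr1 size Ht; rewrite size_take /=; case: ltnP => H1 H2; lia. Qed.

Lemma lang2_sig_rcons t b : lang2 Y (rcons t b) -> lang2 Y (rcons (sigf t) b).
Proof.
move=> H; have E : rcons t b = take (kf t) t ++ rcons (sigf t) b.
  by rewrite -rcons_cat cat_take_drop.
by rewrite E in H; exact: lang2_cat H.
Qed.

Lemma path_ok n w : lang2 Y w -> size w = n -> 1 <= n -> HBpath Xp Y n (pathf w).
Proof.
move=> Hl Hs Hn; split; first by rewrite size_map size_iota.
split.
  move=> v /mapP [k]; rewrite mem_iota => /andP [Hk1 Hk2] ->.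
  have Hne : take k w <> [::] by apply: take_ne; lia.
  by case: (sigf_is_sig (lang2_take k Hl) Hne) => _ [].
split.
  have -> : pathf w = sigf (take 1 w) :: behead (pathf w).
    by move: Hn; rewrite -Hs /pathf; case: (size w).
  have Hne : take 1 w <> [::] by apply: take_ne; lia.
  have [Hlt _] := kf_spec (lang2_take 1 Hl) Hne.
  rewrite /= /sigf size_drop.
  have Hs1 : size (take 1 w) = 1 by rewrite size_take; case: ltnP => H1; lia.
  by rewrite Hs1 in Hlt *; move: Hlt; case: (kf _).
move=> i Hi.
case: w Hl Hs => [|a w0] Hl Hs; first by rewrite -Hs in Hn.
set w := a :: w0 in Hl Hs *.
rewrite !nth_pathf; try lia.
rewrite [take i.+2 w](take_nth a); last by lia.
set t := take i.+1 w; set b := nth a w i.+1.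
have Hlt : lang2 Y (rcons t b).
  rewrite /t /b -(take_nth a); first exact: lang2_take.
  lia.
have Hne : t <> [::] by apply: take_ne; lia.
rewrite /arrow; exists b; split; first exact: (lang2_sig_rcons Hlt).
rewrite sigf_rcons //; apply: sigf_is_sig; first exact: (lang2_sig_rcons Hlt).
by case: (sigf t).
Qed.

Lemma sigf1 a : lang2 Y [:: a] -> sigf [:: a] = [:: a].
Proof.
move=> Hl; have [Hlt _] := kf_spec Hl (fun h => ltac:(discriminate h)).
by rewrite /sigf; move: Hlt; case: (kf _).
Qed.

Lemma path_inv n p : 1 <= n -> HBpath Xp Y n p ->
  exists w, lang2 Y w /\ size w = n /\ p = pathf w.
Proof.
move=> Hn [Hsz [Hsg [Hhd Harr]]].
case: p Hsz Hsg Hhd Harr => [|v0 p'] Hsz Hsg Hhd Harr; first by rewrite -Hsz in Hn.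
case: v0 Hsz Hsg Hhd Harr => [|a [|? ?]] // Hsz Hsg _ Harr.
set p := [:: a] :: p' in Hsz Hsg Harr *.
set w := [seq last a v | v <- p].
have Hsw : size w = n by rewrite size_map.
have key : forall k, k < n -> lang2 Y (take k.+1 w) /\ nth [::] p k = sigf (take k.+1 w).
  elim=> [|k IH] Hk.
    have Hl1 : lang2 Y [:: a] by case: (Hsg [:: a] (mem_head _ _)).
    have -> : take 1 w = [:: a] by rewrite /w /= take0.
    by split => //; rewrite sigf1.
  have [Hl IHe] := IH (ltnW Hk).
  have [b [Hlb Hsig]] := Harr k Hk.
  have Hne : take k.+1 w <> [::] by apply: take_ne; lia.
  rewrite IHe in Hlb Hsig.
  have Hl2 := lang2_ext Hl Hne Hlb.
  have Hne2 : rcons (sigf (take k.+1 w)) b <> [::] by case: (sigf _).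
  have Heq := is_sig_uniq Hsig (sigf_is_sig Hlb Hne2).
  rewrite -sigf_rcons // in Heq.
  have Hwk : nth a w k.+1 = b.
    rewrite /w (nth_map [::]) ?Hsz // Heq last_sigf //; first by rewrite last_rcons.
  have Ht : take k.+2 w = rcons (take k.+1 w) b by rewrite (take_nth a) ?Hwk // Hsw.
  by rewrite Ht; split.
exists w; split.
  have [H _] := key n.-1 ltac:(lia).
  by move: H; rewrite prednK // -Hsw take_size.
split => //.
apply: (eq_from_nth (x0 := [::])); first by rewrite size_map size_iota Hsw.
move=> i Hi; rewrite nth_pathf; last by rewrite Hsw -Hsz.
by case: (key i ltac:(lia)).
Qed.

Lemma pathf_inj w1 w2 : lang2 Y w1 -> lang2 Y w2 -> pathf w1 = pathf w2 -> w1 = w2.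
Proof.
move=> H1 H2 Hp.
have Hs : size w1 = size w2 by have := congr1 size Hp; rewrite !size_map !size_iota.
case: w1 H1 Hs Hp => [|a w1'] H1 Hs Hp; first by case: w2 Hs H2 Hp.
apply: (eq_from_nth (x0 := a)) => // i Hi.
have F : forall w, lang2 Y w -> i < size w -> last a (nth [::] (pathf w) i) = nth a w i.
  move=> w Hl Hiw; rewrite nth_pathf // last_sigf; first by rewrite (take_nth a) // last_rcons.
    exact: lang2_take.
  by apply: take_ne; lia.
by rewrite -F // Hp F // -Hs.
Qed.

Lemma count_gen n : 1 <= n -> HBpath_count Xp Y n (complexity (lang2 Y) n).
Proof.
move=> Hn.
set S := [set t : n.-tuple A | `[< lang2 Y (val t) >] ].
exists [seq pathf (val t) | t <- enum S].
split.
  rewrite map_inj_in_uniq ?enum_uniq // => t1 t2.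
  rewrite !mem_enum !inE => /asboolP H1 /asboolP H2 /(pathf_inj H1 H2) H.
  exact: val_inj.
split; last by rewrite size_map /complexity cardE.
move=> p; split.
  case/mapP => t; rewrite mem_enum inE => /asboolP Ht ->.
  by apply: path_ok => //; rewrite size_tuple.
move=> /(path_inv Hn) [w [Hl [Hs ->]]].
have Hs' : size w == n by apply/eqP.
apply/mapP; exists (Tuple Hs') => //.
by rewrite mem_enum inE; apply/asboolT.
Qed.

End Gen.

Theorem corollary5p9 (A : finType) :
  (* one-sided case *)
  (forall Xp : (nat -> A) -> Prop,
     one_sided_subshift Xp ->
     (forall w, lang1 Xp w <-> lang2 (natext Xp) w) ->
     forall n : nat, 1 <= n ->
       HBpath_count Xp (natext Xp) n (complexity (lang1 Xp) n)) /\
  (* two-sided case (here \tilde X = X and X^+ = right rays of X) *)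
  (forall X : (Z -> A) -> Prop,
     two_sided_subshift X ->
     forall n : nat, 1 <= n ->
       HBpath_count (rays X) X n (complexity (lang2 X) n)).
Proof.
split.
- move=> Xp _ HL n Hn.
  have -> : lang1 Xp = lang2 (natext Xp).
    by apply: funext => w; apply: propext; exact: HL.
  apply: count_gen => //.
  + move=> x; split => H p.
      have -> : (fun i => shift2 x (p + Z.of_nat i)%Z) = (fun i => x ((p + 1) + Z.of_nat i)%Z).
        by apply: funext => i; rewrite /shift2; f_equal; lia.
      exact: H.
    have -> : (fun i => x (p + Z.of_nat i)%Z) = (fun i => shift2 x ((p - 1) + Z.of_nat i)%Z).
      by apply: funext => i; rewrite /shift2; f_equal; lia.
    exact: H.
  + by move=> x H; exact: (H 0%Z).
- move=> X [_ [_ Hsh]] n Hn; apply: count_gen => //.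
  by move=> x Hx; exists x; split.
Qed.
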